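(* Let $d,r\ge1$ and consider a reaction network with species $S_1,\dots,S_{d+r}$ and reactions $y_k\to y'_k$ ($k=1,\dots,K$), where $y_k,y'_k\in\mathbb Z^{d+r}_{\ge 0}$ and $y_k\ne y'_k$. Put $\alpha_i=0$ for $i\le d$ and $\alpha_i=1$ for $i>d$. Fix $\kappa_k>0$, real $\beta_k$, $z^0_\ell\in\mathbb Z^d_{\ge0}$ and $z^0_h\in\mathbb R^r_{>0}$. Let $X^N$ be the continuous-time Markov chain on $\mathbb Z^{d+r}_{\ge0}$ which jumps from $x$ to $x+y'_k-y_k$ with intensity $N^{\beta_k}\kappa_k x^{(y_k)}$, started at $X^N_i(0)=N^{\alpha_i}z^0_i$, where $z^0=(z^0_\ell,z^0_h)$. Let $\theta_0=\max_k(\beta_k+y_k\cdot\alpha)$ and $\mathcal R_0=\{k:\beta_k+y_k\cdot\alpha=\theta_0\}$. Let $Z^N$ be the scaled process with $Z^N_i(t)=N^{-\alpha_i}X^N_i(N^{-\theta_0}t)$, and let $p^N(A,t)=P(Z^N(t)\in A)$. Let $\mathbb S_\ell\times\mathbb S_h$ be the state space of $Z^N$, with $\mathbb S_\ell\subseteq\mathbb Z^d_{\ge0}$ and $\mathbb S_h\subseteq\mathbb R^r_{\ge0}$. For $k\in\mathcal R_0$ and $z_h\in\mathbb R^r_{\ge0}$, put $$\lambda^N_{H,k}(z_h)=\prod_{i=1}^r z_{h,i}\Bigl(z_{h,i}-\tfrac1N\Bigr)\cdots\Bigl(z_{h,i}-\tfrac{y_{k,d+i}-1}{N}\Bigr)$$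 and $s_k=(z^0_h)^{q_H(y_k)}$. For $M>0$ define $S_M=S_{L,M}\times S_{H,M}$, where $$S_{L,M}=\{z_\ell\in\mathbb S_\ell:\|z_\ell\|_\infty\le M\},$$ $$S_{H,M}=\{z_h\in\mathbb S_h:|\lambda^N_{H,k}(z_h)-s_k|\le M/N\ \text{for all }k\in\mathcal R_0\}.$$ Let $\tau^N_m$ be the time of the $\lfloor m\rfloor$-th transition of $Z^N$. Then there exists a constant $c>0$ such that, for $M=N^\rho$ with arbitrary $\rho\in(0,1)$ and $N$ sufficiently large, $p^N(S_M^c,t)\le P(\tau^N_{cM}<t)$ for all $t$.
   Context: Notation: $n^{(k)}=n(n-1)\cdots(n-k+1)$ when $n\ge k$ and $n^{(k)}=0$ otherwise, with $x^{(y)}=\prod_i x_i^{(y_i)}$ and $u^v=\prod_i u_i^{v_i}$. The map $q_H$ keeps the last $r$ coordinates of a vector in $\mathbb Z^{d+r}$. The symbol $\lfloor m\rfloor$ denotes the floor of $m$. *)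

(* Defs.v *)
From HB Require Import structures.
From mathcomp Require Import all_boot all_order all_algebra.
From mathcomp Require Import all_classical all_reals all_analysis.
From mathcomp Require Import measurable_realfun.
Set Implicit Arguments. Unset Strict Implicit. Unset Printing Implicit Defensive.
Import Order.TTheory GRing.Theory Num.Theory.
Local Open Scope ring_scope.
Local Open Scope classical_set_scope.

Definition state (n : nat) := {ffun 'I_n -> nat}.

Section CRN.
Variables (R : realType) (d r K : nat).
Variables (y y' : 'I_K -> state (d + r)) (kappa beta : 'I_K -> R).

Definition ffact_vec (x yk : state (d + r)) : nat :=
  (\prod_(i < d + r) (x i) ^_ (yk i))%N.

Definition rate (N : nat) (k : 'I_K) (x : state (d + r)) : R :=
  powR (N%:R) (beta k) * kappa k * (ffact_vec x (y k))%:R.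

(* state after reaction k (exact whenever rate > 0, since then y_k <= x) *)
Definition target (k : 'I_K) (x : state (d + r)) : state (d + r) :=
  [ffun i => (x i + y' k i - y k i)%N].

Definition qtot (N : nat) (x : state (d + r)) : R := \sum_(k < K) rate N k x.

Definition qrate (N : nat) (x z : state (d + r)) : R :=
  \sum_(k < K | target k x == z) rate N k x.

Definition jump_prob (N : nat) (x z : state (d + r)) : R :=
  if qtot N x == 0 then (z == x)%:R else qrate N x z / qtot N x.

(* (J, H) is the (jump chain, holding times) description of the continuous-time
   Markov chain with the above intensities started at x0: the joint law of
   (J_0..J_n, H_0..H_{n-1}) is given on all rectangles. *)
Definition is_CTMC (N : nat) (x0 : state (d + r))
  {dsp : measure_display} {Omega : measurableType dsp}
  (P : probability Omega R)
  (J : nat -> Omega -> state (d + r)) (H : nat -> Omega -> \bar R) : Prop :=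
  (forall n x, measurable [set w : Omega | J n w = x]) /\
  (forall n, measurable_fun [set: Omega] (H n : Omega -> \bar R)) /\
  (forall (n : nat) (xs : nat -> state (d + r)) (ts : nat -> R),
     (forall i, 0 <= ts i) ->
     P [set w : Omega | (forall i, (i <= n)%N -> J i w = xs i) /\
                (forall i, (i < n)%N -> ((ts i)%:E < H i w)%E)]
     = ((xs 0%N == x0)%:R *
        \prod_(i < n) (jump_prob N (xs i) (xs i.+1) *
                       expR (- (qtot N (xs i) * ts i))))%:E).

Definition jump_time (H : nat -> \bar R) (n : nat) : \bar R :=
  (\sum_(i < n) H i)%E.

Definition lambdaH (N : nat) (k : 'I_K) (x : state (d + r)) : R :=
  \prod_(i < r) \prod_(j < y k (rshift d i))
     ((x (rshift d i))%:R / N%:R - j%:R / N%:R).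

Definition s_k (z0h : 'I_r -> R) (k : 'I_K) : R :=
  \prod_(i < r) z0h i ^+ y k (rshift d i).

Definition y_alpha (k : 'I_K) : nat := (\sum_(i < r) y k (rshift d i))%N.

(* Z^N in S_M, expressed on the unscaled state x = X^N (z_l = x_l, z_h = x_h/N) *)
Definition in_SM (N : nat) (theta0 M : R) (z0h : 'I_r -> R)
  (x : state (d + r)) : Prop :=
  (forall i : 'I_d, (x (lshift r i))%:R <= M) /\
  (forall k : 'I_K, beta k + (y_alpha k)%:R = theta0 ->
     `|lambdaH N k x - s_k z0h k| <= M / N%:R).

End CRN.

(* Main.v *)
Require Import Defs.
From HB Require Import structures.
From mathcomp Require Import all_boot all_order all_algebra.
From mathcomp Require Import all_classical all_reals all_analysis.
From mathcomp Require Import measurable_realfun.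
From mathcomp Require Import zify ring lra.
Set Implicit Arguments. Unset Strict Implicit. Unset Printing Implicit Defensive.
Import Order.TTheory GRing.Theory Num.Theory.
Section Paths.
Variables (d r K : nat) (y y' : 'I_K -> state (d + r)).
Local Notation st := (state (d + r)).

Definition succ (x : st) : seq st :=
  undup (x :: [seq target y y' k x | k <- enum 'I_K]).

Fixpoint paths (x0 : st) (n : nat) : seq (seq st) :=
  match n with
  | 0 => [:: [:: x0]]
  | n.+1 => [seq rcons p z | p <- paths x0 n, z <- succ (last x0 p)]
  end.

Lemma paths_size x0 n p : p \in paths x0 n -> size p = n.+1.
Proof.
elim: n p => [|n IH] p /=; first by rewrite inE => /eqP ->.
by case/allpairsPdep => q [z [Hq _ ->]]; rewrite size_rcons (IH _ Hq).
Qed.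

Lemma paths_uniq x0 n : uniq (paths x0 n).
Proof.
elim: n => [|n IH] //=.
apply: allpairs_uniq_dep => //; first by move=> q _; exact: undup_uniq.
move=> [q1 z1] [q2 z2] _ _ /= /rcons_inj [-> ->] //.
Qed.

Lemma paths_head x0 n p : p \in paths x0 n -> nth x0 p 0 = x0.
Proof.
elim: n p => [|n IH] p /=; first by rewrite inE => /eqP ->.
case/allpairsPdep => q [z [Hq _ ->]]; rewrite nth_rcons (paths_size Hq) /=.
exact: IH.
Qed.

Definition Ymax : nat := (\max_(k < K) \max_(j < d + r) (y k j + y' k j))%N.

Lemma yY k j : (y k j <= Ymax /\ y' k j <= Ymax)%N.
Proof.
have H1 : (y k j + y' k j <= Ymax)%N.
  apply: leq_trans (leq_bigmax_cond _ (erefl true)).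
  exact: (leq_bigmax_cond j (erefl true)).
split; apply: leq_trans H1; [exact: leq_addr | exact: leq_addl].
Qed.

Lemma succ_bound x z j : z \in succ x -> (z j <= x j + Ymax /\ x j <= z j + Ymax)%N.
Proof.
rewrite mem_undup inE => /predU1P [->|]. { split; exact: leq_addr. }
case/mapP => k _ ->; rewrite /target ffunE.
have := yY k j; lia.
Qed.

Lemma paths_bound x0 n p : p \in paths x0 n -> forall j,
  (nth x0 p n j <= x0 j + n * Ymax /\ x0 j <= nth x0 p n j + n * Ymax)%N.
Proof.
elim: n p => [|n IH] p /=; first by rewrite inE => /eqP -> j /=; lia.
case/allpairsPdep => q [z [Hq Hz ->]] j.
rewrite nth_rcons (paths_size Hq) ltnn eqxx.
have := IH _ Hq j; have := succ_bound j Hz.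
rewrite -nth_last (paths_size Hq) /=.
lia.
Qed.

Section Weights.
Variables (R : realType) (kappa beta : 'I_K -> R) (N : nat).
Local Open Scope ring_scope.

Lemma sum_single (T : eqType) (u : seq T) (a : T) (c : R) :
  uniq u -> a \in u -> \sum_(z <- u) (if z == a then c else 0) = c.
Proof.
move=> Hu Ha; rewrite (perm_big _ (perm_to_rem Ha)) big_cons eqxx big1_seq; first exact: addr0.
move=> z /andP [_ Hz]; case: eqP => // Eza; move: Hz; rewrite Eza.
by rewrite (mem_rem_uniq _ Hu) inE eqxx.
Qed.

Lemma jump_sum x : \sum_(z <- succ x) jump_prob y y' kappa beta N x z = 1.
Proof.
rewrite /jump_prob; case: eqP => Hq.
  have -> : \sum_(z <- succ x) ((z == x)%:R : R) = \sum_(z <- succ x) (if z == x then 1 else 0).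
    by apply: eq_bigr => z _; case: eqP.
  by apply: sum_single; [exact: undup_uniq | rewrite mem_undup mem_head].
rewrite -mulr_suml /qrate.
under eq_bigr do rewrite big_mkcond.
rewrite exchange_big /=.
have -> : \sum_(k < K) \sum_(z <- succ x) (if target y y' k x == z then rate y kappa beta N k x else 0)
   = \sum_(k < K) rate y kappa beta N k x.
  apply: eq_bigr => k _.
  under eq_bigr do rewrite eq_sym.
  apply: sum_single; first exact: undup_uniq.
  by rewrite mem_undup inE; apply/orP; right; apply: map_f; rewrite mem_enum.
by rewrite divff //; apply/eqP.
Qed.

Definition weight (x0 : st) (n : nat) (p : seq st) : R :=
  \prod_(i < n) jump_prob y y' kappa beta N (nth x0 p i) (nth x0 p i.+1).

Lemma paths_weight x0 n : \sum_(p <- paths x0 n) weight x0 n p = 1.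
Proof.
elim: n => [|n IH] /=; first by rewrite big_seq1 /weight big_ord0.
rewrite big_allpairs_dep /= -[RHS]IH !big_seq; apply: eq_bigr => p Hp.
have Hs := paths_size Hp.
have E : forall z, weight x0 n.+1 (rcons p z) =
    weight x0 n p * jump_prob y y' kappa beta N (last x0 p) z.
  move=> z; rewrite /weight big_ord_recr /=; congr (_ * _).
    apply: eq_bigr => i _; rewrite /= !nth_rcons Hs.
    by rewrite (ltn_trans (ltn_ord i)) // ltnS ltn_ord.
  by rewrite !nth_rcons Hs ltnSn ltnn eqxx -nth_last Hs.
rewrite (eq_bigr (fun z => weight x0 n p * jump_prob y y' kappa beta N (last x0 p) z)); last first.
  by move=> z _; apply: E.
by rewrite -mulr_sumr jump_sum mulr1.
Qed.
End Weights.
End Paths.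

Local Open Scope ring_scope.
Section ProdBound.
Variable R : realFieldType.

Lemma prod_norm_le (I : eqType) (s : seq I) (b : I -> R) Z :
  0 <= Z -> (forall i, i \in s -> `|b i| <= Z) ->
  `|\prod_(i <- s) b i| <= (Z + 1) ^+ size s.
Proof.
move=> Z0; elim: s => [|a s IH] Hb; first by rewrite big_nil normr1 expr0.
rewrite big_cons normrM exprS /=; apply: ler_pM => //.
  by apply: le_trans (Hb a (mem_head _ _)) _; lra.
by apply: IH => i Hi; apply: Hb; rewrite inE Hi orbT.
Qed.

Lemma prod_diff_le (I : eqType) (s : seq I) (a b : I -> R) e Z :
  0 <= e <= 1 -> 0 <= Z -> (forall i, i \in s -> `|a i - b i| <= e) ->
  (forall i, i \in s -> `|b i| <= Z) ->
  `|\prod_(i <- s) a i - \prod_(i <- s) b i| <= (size s)%:R * e * (Z + 1) ^+ size s.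
Proof.
move=> /andP [e0 e1] Z0; elim: s => [|a0 s IH] Ha Hb.
  by rewrite !big_nil subrr normr0 mul0r mul0r.
rewrite !big_cons /=.
have Ha' : forall i, i \in s -> `|a i - b i| <= e by move=> i Hi; apply: Ha; rewrite inE Hi orbT.
have Hb' : forall i, i \in s -> `|b i| <= Z by move=> i Hi; apply: Hb; rewrite inE Hi orbT.
have hAB := IH Ha' Hb'.
have hB := prod_norm_le Z0 Hb'.
set A := \prod_(i <- s) a i in hAB *; set B := \prod_(i <- s) b i in hAB hB *.
set W := (Z + 1) ^+ size s in hAB hB *.
have W0 : 0 <= W by rewrite /W exprn_ge0 //; lra.
have h1 : `|a a0 - b a0| <= e by apply: Ha; exact: mem_head.
have h2 : `|b a0| <= Z by apply: Hb; exact: mem_head.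
have ha0 : `|a a0| <= Z + 1.
  have : `|a a0| <= `|b a0| + `|a a0 - b a0|.
    by rewrite -[X in `|X| <= _](subrK (b a0)) addrC ler_normD.
  lra.
have -> : a a0 * A - b a0 * B = a a0 * (A - B) + (a a0 - b a0) * B by ring.
apply: le_trans (ler_normD _ _) _; rewrite !normrM.
have u1 : `|a a0| * `|A - B| <= (Z + 1) * ((size s)%:R * e * W).
  by apply: ler_pM.
have u2 : `|a a0 - b a0| * `|B| <= e * W by apply: ler_pM.
have u3 : e * W <= (Z + 1) * (e * W).
  have : 0 <= e * W by apply: mulr_ge0.
  nra.
rewrite exprS -/W mulrSr.
lra.
Qed.
End ProdBound.
Section SM.
Variables (R : realType) (d r K : nat) (y y' : 'I_K -> state (d + r)) (beta : 'I_K -> R).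
Variables (z0l : 'I_d -> nat) (z0h : 'I_r -> R).
Hypothesis z0h_pos : forall i, 0 < z0h i.

Definition Yr : R := ((Ymax y y').+1)%:R.
Definition Zh : R := \sum_(i < r) z0h i.
Definition Lc : nat := (r * (Ymax y y').+1)%N.
Definition Qc : R := Lc%:R * (Zh + 1) ^+ Lc + 1.
Definition cc : R := (2 * Yr * Qc)^-1.
Definition Zl : R := \sum_(i < d) (z0l i)%:R.

Lemma le_sum_term (I : finType) (F : I -> R) i : (forall j, 0 <= F j) -> F i <= \sum_j F j.
Proof. by move=> H; rewrite (bigD1 i) //= lerDl sumr_ge0. Qed.

Lemma Yr_ge1 : 1 <= Yr. Proof. by rewrite /Yr ler1n. Qed.
Lemma Zh_ge0 : 0 <= Zh. Proof. by apply: sumr_ge0 => i _; apply: ltW. Qed.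
Lemma Qc_ge1 : 1 <= Qc.
Proof.
rewrite /Qc lerDr; apply: mulr_ge0 => //; apply: exprn_ge0.
have := Zh_ge0; lra.
Qed.

Lemma SM_ok (N n : nat) (M theta0 : R) (x0 x : state (d + r)) :
  (0 < N)%N ->
  2 * Zl <= M -> 2 * Qc * Yr <= M -> M <= N%:R -> 2 * Yr <= N%:R ->
  (forall i, x0 (lshift r i) = z0l i) ->
  (forall i, (x0 (rshift d i))%:R = N%:R * z0h i) ->
  (forall j, x j <= x0 j + n * Ymax y y' /\ x0 j <= x j + n * Ymax y y')%N ->
  n%:R <= cc * M ->
  in_SM y beta N theta0 M z0h x.
Proof.
move=> N0 hZl hQ hMN hYN hx0l hx0h hx hn.
have Yr1 := Yr_ge1; have Q1 := Qc_ge1.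
have M0 : 0 <= M.
  have : 0 <= 2 * Qc * Yr by apply: mulr_ge0; [apply: mulr_ge0|]; lra.
  lra.
have Nr0 : (0 : R) < N%:R by rewrite ltr0n.
set K1 := cc * M * Yr.
have hK : 2 * Qc * K1 = M by rewrite /K1 /cc; field; apply/andP; split; apply/lt0r_neq0; lra.
have cc0 : 0 <= cc.
  rewrite /cc invr_ge0; apply: mulr_ge0; [apply: mulr_ge0|]; lra.
have K10 : 0 <= K1 by rewrite /K1; apply: mulr_ge0; [apply: mulr_ge0|]; lra.
have hK2 : K1 <= M / 2 by nra.
have hnY : (n * Ymax y y')%:R <= K1.
  rewrite natrM /K1; apply: ler_pM => //; rewrite /Yr ler_nat; exact: leqnSn.
split.
  move=> i; have := hx (lshift r i); rewrite hx0l => -[h1 _].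
  have : (x (lshift r i))%:R <= (z0l i)%:R + (n * Ymax y y')%:R :> R.
    by rewrite -natrD ler_nat.
  have : (z0l i)%:R <= Zl. rewrite /Zl. by apply: (@le_sum_term _ (fun j => ((z0l j)%:R : R))) => j.
  lra.
move=> k _.
pose m := fun i : 'I_r => y k (rshift d i).
pose Sq := [seq (i, j) | i <- index_enum 'I_r, j <- index_iota 0 (m i)].
pose af := fun p : 'I_r * nat => (x (rshift d p.1))%:R / N%:R - p.2%:R / N%:R :> R.
pose bf := fun p : 'I_r * nat => z0h p.1.
have E1 : lambdaH R y N k x = \prod_(p <- Sq) af p.
  by rewrite big_allpairs_dep; apply: eq_bigr => i _; rewrite big_mkord.
have E2 : s_k y z0h k = \prod_(p <- Sq) bf p.
  by rewrite big_allpairs_dep; apply: eq_bigr => i _; rewrite [RHS](eq_bigr (fun=> z0h i)) // prodr_const_nat subn0.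
pose e := (K1 + Yr) / N%:R.
have e0 : 0 <= e by rewrite /e; apply: divr_ge0; lra.
have e1 : e <= 1 by rewrite /e ler_pdivrMr // mul1r; lra.
have hab : forall p, p \in Sq -> `|af p - bf p| <= e.
  move=> p /allpairsPdep [i [j [_ Hj ->]]].
  rewrite mem_index_iota in Hj.
  have hjY : (j <= Ymax y y')%N.
    have hY := (yY y y' k (rshift d i)).1; case/andP: Hj => _ Hj.
    exact: ltnW (leq_trans Hj hY).
rewrite /af /bf /=.
  have -> : z0h i = (x0 (rshift d i))%:R / N%:R.
    rewrite hx0h mulrAC divff ?mul1r //; exact: lt0r_neq0.
rewrite -!mulrBl normrM [`|_^-1|]ger0_norm ?invr_ge0 ?ler0n // /e ler_pM2r ?invr_gt0 //.
  have := hx (rshift d i) => -[h1 h2].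
  have h1' : (x (rshift d i))%:R <= (x0 (rshift d i))%:R + (n * Ymax y y')%:R :> R.
    by rewrite -natrD ler_nat.
  have h2' : (x0 (rshift d i))%:R <= (x (rshift d i))%:R + (n * Ymax y y')%:R :> R.
    by rewrite -natrD ler_nat.
  have hj' : j%:R <= Yr by rewrite /Yr ler_nat; apply: leq_trans hjY _.
  have hj0 : (0:R) <= j%:R by [].
rewrite ler_norml; apply/andP; split; lra.
have hb : forall p, p \in Sq -> `|bf p| <= Zh.
  move=> p _; rewrite /bf ger0_norm; last exact: ltW.
  by apply: (@le_sum_term _ z0h) => j; apply: ltW.
have ee : 0 <= e <= 1 by rewrite e0 e1.
have := prod_diff_le ee Zh_ge0 hab hb.
rewrite -E1 -E2 => hbd; apply: le_trans hbd _.
have hS : (size Sq <= Lc)%N.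
  rewrite size_allpairs_dep sumnE big_map.
  apply: (@leq_trans (\sum_(i < r) (Ymax y y').+1)%N).
    apply: leq_sum => i _; rewrite size_iota subn0.
    exact: leq_trans (yY y y' k (rshift d i)).1 (leqnSn _).
  by rewrite sum_nat_const card_ord.
have W1 : 1 <= Zh + 1 by have := Zh_ge0; lra.
have W0 : 0 <= Zh + 1 by lra.
apply: (@le_trans _ _ (Lc%:R * e * (Zh + 1) ^+ Lc)).
  apply: ler_pM; [apply: mulr_ge0 => //| exact: exprn_ge0 | | exact: ler_weXn2l].
  by apply: ler_pM => //; rewrite ler_nat.
have hLQ : Lc%:R * (Zh + 1) ^+ Lc <= Qc by rewrite /Qc lerDl.
apply: (@le_trans _ _ (Qc * e)).
  rewrite mulrAC; exact: ler_wpM2r.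
rewrite /e mulrA ler_pM2r ?invr_gt0 // mulrDr.
lra.
Qed.
End SM.

Local Open Scope classical_set_scope.
Lemma in_bigsetU (T : Type) (I : eqType) (s : seq I) (F : I -> set T) w :
  (\big[setU/set0]_(i <- s) F i) w <-> exists i, i \in s /\ F i w.
Proof.
elim: s => [|a s IH]; first by rewrite big_nil; split => [[]|[i []]].
rewrite big_cons; split.
  case => [Fa|/IH [i [Hi Fi]]]; first by exists a; rewrite mem_head.
  by exists i; rewrite inE Hi orbT.
move=> [i [Hi Fi]]; move: Hi; rewrite inE => /orP [/eqP <-|Hi]; first by left.
by right; apply/IH; exists i.
Qed.

Lemma measure_bigsetU_seq d (T : measurableType d) (R : realType)
  (mu : {measure set T -> \bar R}) (I : eqType) (s : seq I) (F : I -> set T) :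
  uniq s -> (forall i, i \in s -> measurable (F i)) ->
  (forall i j, i \in s -> j \in s -> i != j -> F i `&` F j = set0) ->
  mu (\big[setU/set0]_(i <- s) F i) = (\sum_(i <- s) mu (F i))%E.
Proof.
elim: s => [|a s IH] /=; first by rewrite !big_nil measure0.
move=> /andP [an us] mF dF.
rewrite !big_cons measureU.
- congr (_ + _)%E; apply: IH => // [i Hi|i j Hi Hj]; first by apply: mF; rewrite inE Hi orbT.
  by apply: dF; rewrite inE ?Hi ?Hj orbT.
- by apply: mF; rewrite mem_head.
- rewrite big_seq; apply: bigsetU_measurable => i Hi; apply: mF; by rewrite inE Hi orbT.
- apply: funext => w; apply: propext; split => // -[Fa /in_bigsetU [i [Hi Fi]]].
  have E : F a `&` F i = set0.
    apply: dF; rewrite ?mem_head ?inE ?Hi ?orbT //.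
    by apply: contraNneq an => ->.
  by rewrite -E; split.
Qed.

Lemma jt_lt (R : realType) (h : nat -> \bar R) n m (s : R) : (m < n)%N ->
  (forall i, (i < n)%N -> (0 < h i)%E) -> (jump_time h n <= s%:E)%E ->
  (jump_time h m < s%:E)%E.
Proof.
move=> mn hpos hn.
move: hn; rewrite /jump_time -!(big_mkord xpredT h) (big_cat_nat (leq0n m) (ltnW mn)) /=.
rewrite (big_ltn mn).
set a := (\sum_(0 <= i < m) h i)%E.
set b := (\sum_(m.+1 <= i < n) h i)%E.
have a0 : (0 <= a)%E by rewrite /a big_seq; apply: sume_ge0 => i; rewrite mem_index_iota => /andP [_ Hi]; apply: ltW; apply: hpos; lia.
have b0 : (0 <= b)%E by rewrite /b big_seq; apply: sume_ge0 => i; rewrite mem_index_iota => /andP [_ Hi]; apply: ltW; apply: hpos; lia.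
have hm : (0 < h m)%E by apply: hpos.
move=> hle.
have hb : (0 < h m + b)%E by apply: lt_le_trans hm _; rewrite leeDl.
have afin : a \is a fin_num.
  rewrite ge0_fin_numE //; apply: le_lt_trans (_ : a <= s%:E)%E _; last exact: ltry.
  by apply: le_trans hle; rewrite leeDl // ltW.
apply: lt_le_trans hle; by rewrite lteDl.
Qed.

Unset Implicit Arguments.
Theorem lemma3p3 (R : realType) (d r K : nat)
  (y y' : 'I_K -> state (d + r)) (kappa beta : 'I_K -> R)
  (z0l : 'I_d -> nat) (z0h : 'I_r -> R) (theta0 : R) :
  (1 <= d)%N -> (1 <= r)%N ->
  (forall k, y k != y' k) ->
  (forall k, 0 < kappa k) ->
  (forall i, 0 < z0h i) ->
  (* theta0 = max_k (beta_k + y_k . alpha) *)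
  (exists k, beta k + (y_alpha y k)%:R = theta0) ->
  (forall k, beta k + (y_alpha y k)%:R <= theta0) ->
  exists c : R, 0 < c /\
  forall rho : R, 0 < rho < 1 ->
  exists N0 : nat, forall N : nat, (N0 <= N)%N ->
  let M := powR (N%:R) rho in
  forall (x0 : state (d + r)),
    (forall i : 'I_d, x0 (lshift r i) = z0l i) ->
    (forall i : 'I_r, (x0 (rshift d i))%:R = N%:R * z0h i) ->
  forall (dsp : measure_display) (Omega : measurableType dsp)
         (P : probability Omega R)
         (J : nat -> Omega -> state (d + r)) (H : nat -> Omega -> \bar R),
    is_CTMC y y' kappa beta N x0 P J H ->
  forall t : R,
    let s := powR (N%:R) (- theta0) * t in
    (* p^N(S_M^c, t) *)
    (P [set w : Omega | exists n : nat,
          (jump_time (H ^~ w) n <= s%:E)%E /\ (s%:E < jump_time (H ^~ w) n.+1)%E /\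
          ~ in_SM y beta N theta0 M z0h (J n w)]
     <=
    (* P(tau^N_{cM} < t) : the floor(cM)-th jump of Z^N happens before t *)
     P [set w : Omega | (jump_time (H ^~ w) (Num.truncn (c * M)) < s%:E)%E])%E.
Proof.
move=> d1 r1 yneq kpos zpos [k0 hk0] hmax.
have Yr1 : 1 <= Yr R y y' := Yr_ge1 R y y'.
have Q1 : 1 <= Qc y y' z0h := Qc_ge1 y y' zpos.
have Zl0 : 0 <= Zl R z0l by apply: sumr_ge0 => i _; apply: ler0n.
exists (cc y y' z0h); split.
  rewrite /cc invr_gt0; apply: mulr_gt0; [apply: mulr_gt0|]; lra.
move=> rho /andP [rho0 rho1].
pose A := 2 * Zl R z0l + 2 * Qc y y' z0h * Yr R y y'.
have QY0 : 0 <= 2 * Qc y y' z0h * Yr R y y'.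
  by apply: mulr_ge0; [apply: mulr_ge0|]; lra.
have A0 : 0 <= A by rewrite /A; lra.
exists (maxn (Num.truncn (powR A rho^-1)).+1 (Num.truncn (2 * Yr R y y')).+1).
move=> N hN M x0 hx0l hx0h dsp Omega P J H hC t; cbv zeta; set s := (N%:R `^ (- theta0) * t).
have hN1 : (Num.truncn (powR A rho^-1) < N)%N.
  by apply: leq_trans hN; rewrite leq_max leqnn.
have hN2 : (Num.truncn (2 * Yr R y y') < N)%N.
  by apply: leq_trans hN; rewrite leq_max leqnn orbT.
have NA : powR A rho^-1 < N%:R by rewrite -truncn_lt_nat // powR_ge0.
have NY : 2 * Yr R y y' < N%:R by rewrite -truncn_lt_nat //; lra.
have N0 : (0 < N)%N by rewrite -(ltr0n R); lra.
have MA : A <= M.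
  have : powR (powR A rho^-1) rho <= powR (N%:R) rho.
    apply: ge0_ler_powR; [exact: ltW | by rewrite nnegrE powR_ge0 | by rewrite nnegrE ler0n | exact: ltW].
  by rewrite -powRrM mulVf ?powRr1 //; apply: lt0r_neq0.
have MN : M <= N%:R.
  rewrite /M -[leRHS](@powRr1 _ (N%:R)) ?ler0n //; apply: ler_powR; [by rewrite ler1n | exact: ltW].
have hSM : forall n (x : state (d + r)),
    (forall j, x j <= x0 j + n * Ymax y y' /\ x0 j <= x j + n * Ymax y y')%N ->
    n%:R <= cc y y' z0h * M -> in_SM y beta N theta0 M z0h x.
  move=> n x hx hn; apply: (@SM_ok R d r K y y' beta z0l z0h zpos N n M theta0 x0 x) => //; rewrite /A in MA; lra.
case: hC => hJ [hHm hP].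
pose E := fun n (p : seq (state (d + r))) => [set w : Omega |
   (forall i, (i <= n)%N -> J i w = nth x0 p i) /\
   (forall i, (i < n)%N -> ((0:R)%:E < H i w)%E)].
pose G := fun n => \big[setU/set0]_(p <- paths y y' x0 n) E n p.
have mH : forall i, measurable [set w | ((0:R)%:E < H i w)%E].
  move=> i; rewrite -[X in measurable X]setTI.
  exact: (measurable_lte measurableT (measurable_cst _) (hHm i)).
have mE : forall n p, measurable (E n p).
  move=> n p.
  have -> : E n p = (\bigcap_i [set w | (i <= n)%N -> J i w = nth x0 p i]) `&`
                    (\bigcap_i [set w | (i < n)%N -> ((0:R)%:E < H i w)%E]).
    apply/seteqP; split => w /=.
      by move=> [h1 h2]; split => i _ /=; [apply: h1 | apply: h2].
    by move=> [h1 h2]; split => i hi; [exact: h1 i I hi | exact: h2 i I hi].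
  apply: measurableI; apply: bigcapT_measurable => i /=.
    case: (leqP i n) => hi.
      have -> : [set w | true -> J i w = nth x0 p i] = [set w | J i w = nth x0 p i].
        by apply/seteqP; split => w /=; [apply | move=> ->].
      exact: hJ.
    have -> : [set w | false -> J i w = nth x0 p i] = setT by apply/seteqP; split.
    exact: measurableT.
  case: (ltnP i n) => hi.
    have -> : [set w | true -> ((0:R)%:E < H i w)%E] = [set w | ((0:R)%:E < H i w)%E].
      by apply/seteqP; split => w /=; [apply | move=> ? _].
    exact: mH.
  have -> : [set w | false -> ((0:R)%:E < H i w)%E] = setT by apply/seteqP; split.
  exact: measurableT.
have PE : forall n p, p \in paths y y' x0 n -> P (E n p) = (weight y y' kappa beta N x0 n p)%:E.
  move=> n p Hp.
  have := hP n (nth x0 p) (fun _ => 0) (fun _ => lexx 0).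
  rewrite /= => ->; congr (_%:E).
  rewrite (paths_head Hp) eqxx mul1r /weight; apply: eq_bigr => i _.
  by rewrite mulr0 oppr0 expR0 mulr1.
have mG : forall n, measurable (G n).
  by move=> n; apply: bigsetU_measurable => p _; apply: mE.
have PG : forall n, P (G n) = 1%E.
  move=> n; rewrite /G measure_bigsetU_seq.
  - rewrite big_seq (eq_bigr (fun p => (weight y y' kappa beta N x0 n p)%:E)); last first.
      by move=> p Hp; apply: PE.
    by rewrite -big_seq sumEFin paths_weight.
  - exact: paths_uniq.
  - by move=> p _; apply: mE.
  - move=> p q Hp Hq pq.
    apply/seteqP; split => // w [[h1 _] [h2 _]].
    move/negP: pq; apply; apply/eqP.
    apply: (@eq_from_nth _ x0); first by rewrite (paths_size Hp) (paths_size Hq).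
    move=> i; rewrite (paths_size Hp) ltnS => hi.
    by rewrite -h1 // -h2.
have nulG : forall n, P.-negligible (~` G n).
  move=> n; apply/negligibleP; first exact: measurableC.
  apply: eq_trans (probability_setC P (mG n)) _; by rewrite PG subee.
have [Nul [mNul PNul hNul]] := negligible_bigcup nulG.
set m := Num.truncn (cc y y' z0h * M).
have cM0 : 0 <= cc y y' z0h * M.
  apply: mulr_ge0; last by rewrite /A in MA; lra.
  rewrite /cc invr_ge0; apply: mulr_ge0; [apply: mulr_ge0|]; lra.
have mjt : forall k, measurable_fun setT (fun w => jump_time (H ^~ w) k).
  by move=> k; apply: emeasurable_sum => i; apply: hHm.
match goal with |- is_true (Order.le (_ ?X) (_ ?Y)) => set Aset := X; set Bset := Y end.
have incl : Aset `<=` Bset `|` Nul.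
  move=> w [n [h1 [h2 h3]]].
  case: (pselect ((\bigcup_n ~` G n) w)) => hb; first by right; apply: hNul.
  left.
  have hG : G n w by apply: contrapT => ng; apply: hb; exists n.
  move: hG => /in_bigsetU [p [Hp [hJ' hH']]].
  have hlt : (m < n)%N.
    rewrite /m truncn_lt_nat //.
    have [hn|//] := leP (n%:R : R) (cc y y' z0h * M).
    exfalso; apply: h3; apply: (hSM n) => // j.
    by rewrite hJ' //; exact: paths_bound.
  exact: (jt_lt hlt hH' h1).
have mB : measurable Bset.
  rewrite /Bset -[X in measurable X]setTI.
  exact: (measurable_lte measurableT (mjt m) (measurable_cst _)).
have mA : measurable Aset.
  have -> : Aset = \bigcup_n ([set w | (jump_time (H ^~ w) n <= s%:E)%E] `&`
      [set w | (s%:E < jump_time (H ^~ w) n.+1)%E] `&`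
      [set w | ~ in_SM y beta N theta0 M z0h (J n w)]).
    apply/seteqP; split => w.
      by move=> [n [h1 [h2 h3]]]; exists n => //.
    by move=> [n _ [[h1 h2] h3]]; exists n.
  apply: bigcupT_measurable => n; apply: measurableI; first apply: measurableI.
  - rewrite -[X in measurable X]setTI.
    exact: (measurable_lee measurableT (mjt n) (measurable_cst _)).
  - rewrite -[X in measurable X]setTI.
    exact: (measurable_lte measurableT (measurable_cst _) (mjt n.+1)).
  - have -> : [set w | ~ in_SM y beta N theta0 M z0h (J n w)] =
        \bigcup_(x : state (d + r)) [set w | J n w = x /\ ~ in_SM y beta N theta0 M z0h x].
      apply/seteqP; split => w.
        by move=> h; exists (J n w).
      by move=> [x _ [Jx h]]; rewrite /= Jx.
    apply: countable_bigcupT_measurable; first exact: countableP.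
    move=> x; case: (pselect (in_SM y beta N theta0 M z0h x)) => hx.
      have -> : [set w | J n w = x /\ ~ in_SM y beta N theta0 M z0h x] = set0.
        by apply/seteqP; split => // w [].
      exact: measurable0.
    have -> : [set w | J n w = x /\ ~ in_SM y beta N theta0 M z0h x] = [set w | J n w = x].
      by apply/seteqP; split => w // [].
    exact: hJ.
have h1 : (P Aset <= P (Bset `|` Nul))%E.
  by apply: le_measure => //; rewrite inE; [exact: mA | exact: measurableU].
apply: le_trans h1 _.
apply: le_trans (measureU2 _ mB mNul) _.
by rewrite [X in (_ + X)%E](_ : _ = 0%E) ?adde0 //; exact: PNul.
Qed.
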